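(* Let $A(x)=\sum_{i=0}^d a_ix^i\in\mathbb{Z}[x]$ have degree $d\ge1$ with $a_0\neq0$, let $m>d$, and let $N=(N_{i,j})$ be the $d\times m$ rational matrix with $N_{i,j}=\delta_{ij}$ for $1\le i,j\le d$ and whose rows are linear recurrences determined by $A$ (i.e. $\sum_{k=0}^d a_kN_{i,j+k}=0$ for $1\le j\le m-d$). Let $p$ be a prime and let $w$ be the abscissa of a vertex of the $p$-adic Newton polygon of $A$. Then the $d\times d$ submatrix of $N$ formed by the columns $1,2,\dots,w,\ m-d+w+1,\dots,m$ is nonsingular. Equivalently, the $(m-d)\times(m-d)$ matrix $U=(a_{w+i-j})_{1\le i,j\le m-d}$ (with $a_k=0$ for $k<0$ or $k>d$) is nonsingular.
   Context: The $p$-adic Newton polygon of $A$ is the lower boundary of the convex hull of the points $(i,v_p(a_i))$, $0\le i\le d$, where $v_p$ is the $p$-adic valuation; its vertices have abscissae $0=w_0<w_1<\dots<w_r=d$. *)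

(* Defs.v *)
From HB Require Import structures.
From mathcomp Require Import all_boot all_order all_algebra.
Set Implicit Arguments. Unset Strict Implicit. Unset Printing Implicit Defensive.
Import Order.TTheory GRing.Theory Num.Theory.
Local Open Scope ring_scope.

Definition vp (p : nat) (a : int) : nat := logn p (absz a).

(* w is the abscissa of a vertex of the p-adic Newton polygon of A, i.e. of
   the lower boundary of the convex hull of the points (i, v_p(a_i)) with
   a_i <> 0: the point (w, v_p(a_w)) is one of the points and there is a
   (non-vertical) line through it such that all the other points lie
   strictly above it (vertex = exposed point of the lower hull). *)
Definition newton_vertex (p : nat) (A : {poly int}) (w : nat) : Prop :=
  A`_w != 0 /\
  exists s : rat, forall i : nat, i != w -> A`_i != 0 ->
    (vp p (A`_w))%:R + s * (i%:R - w%:R) < (vp p (A`_i))%:R.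

(* Entry (i, j) of a d x m matrix with a natural-number column index
   (0-based); 0 if j is out of range. *)
Definition mxat (d m : nat) (N : 'M[rat]_(d, m)) (i : 'I_d) (j : nat) : rat :=
  match @insub _ (fun k => k < m)%N 'I_m j with
  | Some j' => N i j'
  | None => 0
  end.

(* 0-based column selection: columns 0..w-1 and m-d+w..m-1, i.e. the
   1-based columns 1..w, m-d+w+1..m. *)
Definition selcol (d m w : nat) (k : nat) : nat :=
  if (k < w)%N then k else (k + (m - d))%N.

Definition Nsub (d m w : nat) (N : 'M[rat]_(d, m)) : 'M[rat]_d :=
  \matrix_(i < d, k < d) mxat N i (selcol d m w k).

(* U = (a_{w+i-j})_{i,j}, with a_k = 0 for k < 0 (k > d automatic). *)
Definition Umx (A : {poly int}) (n w : nat) : 'M[int]_n :=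
  \matrix_(i < n, j < n) (if (j <= w + i)%N then A`_(w + i - j) else 0).

(* Main.v *)
Require Import Defs.
From HB Require Import structures.
From mathcomp Require Import all_boot all_order all_algebra all_fingroup.
Import Order.TTheory GRing.Theory Num.Theory.
Local Open Scope ring_scope.

Lemma Udet (A : {poly int}) (n w p : nat) :
  prime p -> newton_vertex p A w -> \det (Umx A n w) != 0.
Proof.
move=> pp [Aw0 [s Hs]].
set v := vp p A`_w.
set M := Umx A n w.
have key : forall σ : 'S_n, σ != 1%g ->
    (p ^ (n * v).+1 %| `|(\prod_i M i (σ i))%R|)%N.
  move=> σ σ1.
  case: (eqVneq (\prod_i M i (σ i)) 0) => [->|P0]; first by rewrite dvdn0.
  have nz i : M i (σ i) != 0.
    apply: contraNneq P0 => h; apply/prodf_eq0; exists i => //; exact/eqP.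
  have Hi i : [/\ (σ i <= w + i)%N, A`_(w + i - σ i) != 0 &
                 M i (σ i) = A`_(w + i - σ i)].
    move: (nz i); rewrite /M /Umx mxE; case: ifP => [le h|_]; last by rewrite eqxx.
    by split.
  pose D (i : 'I_n) : rat := (i%:R - (σ i)%:R).
  have Hlt i : σ i != i -> v%:R + s * D i < (vp p (M i (σ i)))%:R.
    move=> si; have [le nzk ->] := Hi i.
    have kw : (w + i - σ i)%N != w.
      apply: contra si => /eqP kw; apply/eqP/val_inj => /=.
      apply/eqP; by rewrite -(eqn_add2l w) -(subnK le) kw.
    have := Hs _ kw nzk.
    by rewrite /D natrB // natrD [_ - w%:R]addrC !addrA addNr add0r.
  have Hle i : v%:R + s * D i <= (vp p (M i (σ i)))%:R.
    case: (eqVneq (σ i) i) => e; last exact: ltW (Hlt i e).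
    have [le _ ->] := Hi i.
    by rewrite /D e subrr mulr0 addr0 addnK.
  have [i0 Hi0] : exists i, σ i != i.
    case: (pickP (fun i => σ i != i)) => [i0 H|H]; first by exists i0.
    case/eqP: σ1; apply/permP => i; rewrite perm1.
    by move: (H i) => /= /negbFE/eqP.
  have sumD : \sum_i D i = 0.
    rewrite /D sumrB [X in X - _](reindex_inj (@perm_inj _ σ)) /=.
    by rewrite subrr.
  have ltsum : ((n * v)%:R : rat) < (\sum_i vp p (M i (σ i)))%:R.
    have -> : ((n * v)%:R : rat) = \sum_i (v%:R + s * D i).
      by rewrite big_split /= -mulr_sumr sumD mulr0 addr0 sumr_const card_ord
        mulnC natrM mulr_natr.
    rewrite natr_sum (bigD1 i0) //= [X in _ < X](bigD1 i0) //=.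
    apply: ltr_leD; first exact: Hlt.
    by apply: ler_sum => i _; apply: Hle.
  rewrite ltr_nat in ltsum.
  apply: dvdn_trans (dvdn_exp2l p ltsum) _.
  rewrite expn_sum.
  apply: (big_ind2 (fun (x : nat) (y : int) => (x %| `|y|)%N)).
  - by rewrite dvd1n.
  - by move=> x1 x2 y1 y2 h1 h2; rewrite abszM dvdn_mul.
  - by move=> i _; apply: pfactor_dvdnn.
rewrite /determinant (bigD1 1%g) //= odd_perm1 expr0 mul1r.
have -> : \prod_i M i ((1%g : 'S_n) i) = A`_w ^+ n.
  rewrite -[n in RHS]card_ord -prodr_const; apply: eq_bigr => i _.
  by rewrite perm1 /M /Umx mxE leq_addl addnK.
set X := \sum_(_ | _) _.
have dX : (((p ^ (n * v).+1)%N)%:Z %| X)%Z.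
  apply: rpred_sum => σ σ1; apply: dvdz_mull.
  by rewrite dvdzE /=; apply: key.
apply/negP => /eqP h.
have : (((p ^ (n * v).+1)%N)%:Z %| A`_w ^+ n)%Z.
  by rewrite -(addrK X (A`_w ^+ n)) h sub0r rpredN.
rewrite dvdzE /= abszX pfactor_dvdn //; last by rewrite expn_gt0 absz_gt0 Aw0.
by rewrite lognX mulnC ltnn.
Qed.

Lemma sum_zero (F : nat -> rat) (a b : nat) :
  (forall t, (a <= t)%N -> (t < b)%N -> F t = 0) -> \sum_(a <= t < b) F t = 0.
Proof.
move=> H; rewrite big_nat_cond big1 // => t /andP [/andP [h1 h2] _].
exact: H.
Qed.

Theorem mainTheorem6 (A : {poly int}) (m : nat) (N : 'M[rat]_((size A).-1, m))
    (p w : nat) :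
  (1 <= (size A).-1)%N ->
  A`_0 != 0 ->
  ((size A).-1 < m)%N ->
  (forall (i : 'I_(size A).-1) (j : nat), (j < (size A).-1)%N ->
     mxat N i j = (i == j :> nat)%:R) ->
  (forall (i : 'I_(size A).-1) (j : nat), (j < m - (size A).-1)%N ->
     \sum_(k < (size A).-1.+1) (A`_k)%:~R * mxat N i (j + k) = 0) ->
  prime p ->
  newton_vertex p A w ->
  \det (Nsub w N) != 0 /\
  \det (Umx A (m - (size A).-1) w) != 0.
Proof.
move=> d1 A0 dm Hid Hrec pp nv.
have sA : size A = (size A).-1.+1 by case: (size A) d1.
have wsA : (w < size A)%N.
  case: nv => nz _; rewrite ltnNge; apply: contra nz => h.
  by rewrite nth_default.
set d := (size A).-1 in N d1 dm Hid Hrec sA wsA *.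
have wd : (w <= d)%N by rewrite -ltnS -sA.
set n := (m - d)%N in Hrec *.
have mdn : m = (d + n)%N by rewrite /n subnKC // ltnW.
have hU := Udet A n w p pp nv.
split => //.
apply/negP => /det0P [c c0 hc].
pose ua t := \sum_(i < d) c 0 i * mxat N i t.
have Hsel k : (k < d)%N -> ua (selcol d m w k) = 0.
  move=> kd; have := congr1 (fun M : 'M[rat]_(1, d) => M 0 (Ordinal kd)) hc; rewrite !mxE => <-.
  by apply: eq_bigr => i _; rewrite mxE.
have Hbig t : (m <= t)%N -> ua t = 0.
  move=> mt; apply: big1 => i _; rewrite /mxat insubN ?mulr0 //.
  by rewrite -leqNgt.
have Hzero t : ~~ ((w <= t) && (t < w + n))%N -> ua t = 0.
  move=> h; case: (leqP m t) => tm; first exact: Hbig.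
  case: (ltnP t w) => tw.
    have td : (t < d)%N by apply: leq_trans tw wd.
    by rewrite -(Hsel t td) /selcol tw.
  rewrite tw /= -leqNgt in h.
  have nt : (n <= t)%N by apply: leq_trans (leq_addl w n) h.
  have kd : (t - n < d)%N by rewrite ltn_subLR // addnC -mdn.
  rewrite -(Hsel _ kd) /selcol ltnNge leq_subRL // addnC h /=.
  by rewrite -/n subnK.
have Hrec' j : (j < n)%N -> \sum_(k < d.+1) (A`_k)%:~R * ua (j + k)%N = 0.
  move=> jn; under eq_bigr do rewrite mulr_sumr.
  rewrite exchange_big /=; apply: big1 => i _.
  rewrite -[RHS](mulr0 (c 0 i)) -[in RHS](Hrec i j jn) mulr_sumr.
  by apply: eq_bigr => k _; rewrite mulrCA.
pose v : 'rV[rat]_n := \row_l ua (w + l)%N.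
pose Uq : 'M[rat]_n := map_mx intr (Umx A n w).
have hUq : \det Uq != 0 by rewrite det_map_mx intr_eq0.
have hv : v *m Uq = 0.
  apply/rowP => j; rewrite !mxE.
  rewrite -[RHS](Hrec' j (ltn_ord j)).
  pose f t := ua t * (if (j <= t)%N then A`_(t - j) else 0)%:~R.
  pose T := (w + n + (j + d.+1))%N.
  have e1 : \sum_(l < n) v 0 l * Uq l j = \sum_(0 <= t < T) f t.
    rewrite (big_cat_nat (n := w)) //= ?leq_addr ?(leq_trans (leq_addr n w)) ?leq_addr //.
    rewrite sum_zero ?add0r; last by move=> t _ tw; rewrite /f Hzero ?mul0r // leqNgt tw.
    rewrite (big_cat_nat (n := w + n)) //= ?leq_addr ?leq_addr //.
    rewrite [X in _ + X]sum_zero ?addr0; last first.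
      by move=> t h _; rewrite /f Hzero ?mul0r // negb_and -leqNgt h orbT.
    rewrite -{1}[w]add0n big_addn addKn big_mkord.
    by apply: eq_bigr => l _; rewrite !mxE addnC.
  have e2 : \sum_(k < d.+1) (A`_k)%:~R * ua (j + k)%N = \sum_(0 <= t < T) f t.
    rewrite (big_cat_nat (n := j)) //= ?leq0n; last first.
      by apply: leq_trans (leq_addr d.+1 j) (leq_addl _ _).
    rewrite sum_zero ?add0r; last first.
      by move=> t _ tj; rewrite /f leqNgt tj mulr0.
    rewrite (big_cat_nat (n := j + d.+1)) //= ?leq_addr ?leq_addl //.
    rewrite [X in _ + X]sum_zero ?addr0; last first.
      move=> t h _; rewrite /f.
      have jt : (j <= t)%N by apply: leq_trans (leq_addr _ _) h.
      rewrite jt nth_default ?mulr0 // sA leq_subRL //.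
    rewrite (big_addn 0 (j + d.+1) j) addKn big_mkord.
    by apply: eq_bigr => k _; rewrite /f leq_addl addnK mulrC addnC.
  by rewrite e1 e2.
have v0 : v = 0.
  have hu : Uq \in unitmx by rewrite unitmxE unitfE.
  by rewrite -(mulmxK hu v) hv mul0mx.
case/eqP: c0; apply/rowP => i; rewrite mxE.
have -> : c 0 i = ua i.
  rewrite /ua (bigD1 i) //= Hid // eqxx mulr1 big1 ?addr0 // => i' ne.
  by move: ne; rewrite Hid // -val_eqE /= => /negbTE ->; rewrite mulr0.
case: (boolP ((w <= i) && (i < w + n))%N) => [/andP [h1 h2] | h]; last exact: Hzero.
have iwn : (i - w < n)%N by rewrite ltn_subLR.
have := congr1 (fun M : 'M[rat]_(1, n) => M 0 (Ordinal iwn)) v0; rewrite !mxE /=.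
by rewrite subnKC.
Qed.
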